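(* The symmetry locus $\mathcal S\subset\mathcal M_2\cong\mathbf C^2$ is an algebraic curve of degree three and genus zero in the coordinates $(\sigma_1,\sigma_2)$. It is given parametrically by $$\sigma_1=4k-2+k^{-1},\qquad \sigma_2=4k^2-4k+5-2k^{-1},\qquad k\in\mathbf C\setminus\{0\}.$$ This curve is non-singular except for a cusp at the point $\langle z\mapsto1/z^2\rangle$, which corresponds to $k=-1/2$, $(\sigma_1,\sigma_2)=(-6,12)$.
   Context: $\mathrm{Rat}_2$ is the space of holomorphic degree-$2$ maps of the Riemann sphere; each $f$ has three fixed points counted with multiplicity, with multipliers $\mu_1,\mu_2,\mu_3$ and elementary symmetric functions $\sigma_1,\sigma_2,\sigma_3$. $\mathcal M_2$, the set of Möbius conjugacy classes $\langle f\rangle$, is identified with $\mathbf C^2$ via $(\sigma_1,\sigma_2)$. An automorphism of $f$ is a Möbius transformation $g\neq\mathrm{id}$ with $g\circ f\circ g^{-1}=f$. The symmetry locus $\mathcal S$ is the set of $\langle f\rangle\in\mathcal M_2$ such that $f$ has a non-trivial automorphism; equivalently the set of classes of maps $z\mapsto k(z+z^{-1})$, $k\neq0$. *)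

(* Defs.v *)
From HB Require Import structures.
From mathcomp Require Import all_boot all_order all_algebra.
From mathcomp Require Import mpoly.
Set Implicit Arguments. Unset Strict Implicit. Unset Printing Implicit Defensive.
Import Order.TTheory GRing.Theory Num.Theory.
Local Open Scope ring_scope.

(* Throughout, C is an algebraically closed field of characteristic 0 with a
   numeric structure (e.g. the complex numbers, R[i] for a real closed R);
   everything below is purely algebraic. *)

Section RatMaps.
Variable C : numClosedFieldType.

(* A point of C^2 (homogeneous coordinates [x : y] on the Riemann sphere). *)
Definition pt := (C * C)%type.

Definition form2 := (C * C * C)%type.
Definition eval2 (q : form2) (v : pt) : C :=
  let: (a, b, c) := q in let: (x, y) := v in a * x ^+ 2 + b * x * y + c * y ^+ 2.

(* Dehomogenisations of a quadratic form, as univariate polynomials: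
   chart at 0: z |-> q(z,1);  chart at infinity: w |-> q(1,w). *)
Definition dehom0 (q : form2) : {poly C} :=
  let: (a, b, c) := q in a *: 'X^2 + b *: 'X + c%:P.
Definition dehomInf (q : form2) : {poly C} :=
  let: (a, b, c) := q in c *: 'X^2 + b *: 'X + a%:P.

(* A pair F = (P, Q) of quadratic forms; it represents the map of the
   Riemann sphere [x : y] |-> [P(x,y) : Q(x,y)], i.e. z |-> P(z,1)/Q(z,1). *)
Definition hmap := (form2 * form2)%type.
Definition hev (F : hmap) (v : pt) : pt := (eval2 F.1 v, eval2 F.2 v).

(* F defines a holomorphic map of degree exactly 2 of the Riemann sphere
   iff P and Q have no common zero on C^2 \ {0}.  Rat_2 = such F (up to the
   irrelevant common scalar). *)
Definition is_rat2 (F : hmap) : Prop :=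
  forall v : pt, v <> (0, 0) -> hev F v <> (0, 0).

(* Moebius transformations: invertible 2x2 matrices (al, be, ga, de),
   acting by [x : y] |-> [al x + be y : ga x + de y]. *)
Definition mob := (C * C * C * C)%type.
Definition mob_ev (g : mob) (v : pt) : pt :=
  let: (al, be, ga, de) := g in let: (x, y) := v in
  (al * x + be * y, ga * x + de * y).
Definition mob_det (g : mob) : C :=
  let: (al, be, ga, de) := g in al * de - be * ga.
(* g is the identity of the sphere iff its matrix is scalar. *)
Definition mob_is_id (g : mob) : Prop :=
  let: (al, be, ga, de) := g in be = 0 /\ ga = 0 /\ al = de.

Definition same_point (u v : pt) : Prop := u.1 * v.2 - u.2 * v.1 = 0.

Definition commutes (g : mob) (F : hmap) : Prop :=
  forall v : pt, v <> (0, 0) -> same_point (mob_ev g (hev F v)) (hev F (mob_ev g v)).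

Definition has_nontriv_aut (F : hmap) : Prop :=
  exists g : mob, mob_det g <> 0 /\ ~ mob_is_id g /\ commutes g F.

(* Fixed point polynomial: [x:y] is fixed iff y P(x,y) - x Q(x,y) = 0. *)
Definition fixpoly (F : hmap) (v : pt) : C :=
  v.2 * eval2 F.1 v - v.1 * eval2 F.2 v.

(* (v1, v2, v3) are the three fixed points of F counted with multiplicity:
   the binary cubic fixpoly factors as kappa * prod_i (y_i X - x_i Y). *)
Definition fixed_points (F : hmap) (v1 v2 v3 : pt) : Prop :=
  [/\ v1 <> (0, 0), v2 <> (0, 0), v3 <> (0, 0) &
   exists2 kappa : C, kappa != 0 &
     forall x y : C, fixpoly F (x, y) =
       kappa * ((v1.2 * x - v1.1 * y) * (v2.2 * x - v2.1 * y) * (v3.2 * x - v3.1 * y))].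

(* If y <> 0, z = x/y is a finite fixed point of
   f(z) = p(z)/q(z) (p = P(.,1), q = Q(.,1)) and the multiplier is
   f'(z) = (p' q - p q')(z) / q(z)^2.  If y = 0 (the point infinity), in the
   coordinate w = 1/z the map is w |-> 1/f(1/w) = Q(1,w)/P(1,w), and the
   multiplier is its derivative at w = 0. *)
Definition ratderiv (p q : {poly C}) (z : C) : C :=
  (p^`() * q - p * q^`()).[z] / q.[z] ^+ 2.
Definition multiplier (F : hmap) (v : pt) : C :=
  if v.2 != 0 then ratderiv (dehom0 F.1) (dehom0 F.2) (v.1 / v.2)
  else ratderiv (dehomInf F.2) (dehomInf F.1) 0.

Definition sigmas (F : hmap) (s1 s2 : C) : Prop :=
  exists v1 v2 v3 : pt, fixed_points F v1 v2 v3 /\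
    let m1 := multiplier F v1 in let m2 := multiplier F v2 in
    let m3 := multiplier F v3 in
    s1 = m1 + m2 + m3 /\ s2 = m1 * m2 + m1 * m3 + m2 * m3.

Definition symmetry_locus (s : C * C) : Prop :=
  exists F : hmap, is_rat2 F /\ has_nontriv_aut F /\ sigmas F s.1 s.2.

(* The map z |-> 1/z^2, i.e. [x : y] |-> [y^2 : x^2]. *)
Definition inv_sq_map : hmap := ((0, 0, 1), (1, 0, 0)).

Definition param (k : C) : C * C :=
  (4 * k - 2 + k^-1, 4 * k ^+ 2 - 4 * k + 5 - 2 * k^-1).

Definition pt2 (s : C * C) : 'I_2 -> C := fun i => if val i == 0%N then s.1 else s.2.
Definition i1 : 'I_2 := @Ordinal 2 0 isT.
Definition i2 : 'I_2 := @Ordinal 2 1 isT.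

Definition mconst (p : {mpoly C[2]}) : bool := (msize p <= 1)%N.
Definition mirreducible (p : {mpoly C[2]}) : Prop :=
  ~~ mconst p /\ forall a b : {mpoly C[2]}, p = a * b -> mconst a || mconst b.

Definition msingular (p : {mpoly C[2]}) (s : C * C) : Prop :=
  [/\ p.@[pt2 s] = 0, (p^`M(i1)).@[pt2 s] = 0 & (p^`M(i2)).@[pt2 s] = 0].

(* cusp: a singular point of multiplicity exactly 2 whose tangent cone is a
   single (double) line: the Hessian is nonzero with zero determinant. *)
Definition mcusp (p : {mpoly C[2]}) (s : C * C) : Prop :=
  let h11 := (p^`M(i1)^`M(i1)).@[pt2 s] in
  let h12 := (p^`M(i1)^`M(i2)).@[pt2 s] in
  let h22 := (p^`M(i2)^`M(i2)).@[pt2 s] in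
  [/\ msingular p s, (h11, h12, h22) <> (0, 0, 0) & h11 * h22 - h12 ^+ 2 = 0].

End RatMaps.

(* Main.v *)
Require Import Defs.
From HB Require Import structures.
From mathcomp Require Import all_boot all_order all_algebra.
From mathcomp Require Import mpoly.
From mathcomp Require Import ring lra zify.
Import Order.TTheory GRing.Theory Num.Theory.
Local Open Scope ring_scope.

Ltac fside := repeat (apply/andP; split); try done; try (by rewrite pnatr_eq0).

Lemma two_neq0 (C : numClosedFieldType) : (2 : C) != 0.
Proof. by rewrite pnatr_eq0. Qed.

Lemma pair_neq0 {C : numClosedFieldType} (x y : C) :
  (x, y) <> (0, 0) <-> (x != 0) || (y != 0).
Proof.
split => [H|].
  have [hx|hx] := eqVneq x 0; last by apply/orP; left.
  have [hy|hy] := eqVneq y 0; last by apply/orP; right.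
  by exfalso; apply: H; rewrite hx hy.
by case/orP => /eqP H [] hx hy; apply: H.
Qed.

Lemma quad_root {C : numClosedFieldType} (p q : C) :
  exists t : C, t ^+ 2 + p * t + q = 0.
Proof.
set r := sqrtC (p ^+ 2 - 4 * q).
have hr : r ^+ 2 = p ^+ 2 - 4 * q by rewrite sqrtCK.
exists ((- p + r) / 2).
have h2 := two_neq0 C.
have -> : ((- p + r) / 2) ^+ 2 + p * ((- p + r) / 2) + q
          = (r ^+ 2 - (p ^+ 2 - 4 * q)) / 4.
  by field; rewrite ?h2 //; have -> : (4 : C) = 2 * 2 by ring.
by rewrite hr subrr mul0r.
Qed.

Lemma form_root {C : numClosedFieldType} (a b c : C) :
  exists v : pt C, v <> (0, 0) /\ eval2 (a, b, c) v = 0.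
Proof.
have [->|a0] := eqVneq a 0.
  exists (1, 0); split; first by apply/pair_neq0; rewrite oner_eq0.
  by rewrite /=; ring.
have [t ht] := quad_root (b / a) (c / a).
exists (t, 1); split; first by apply/pair_neq0; rewrite oner_eq0 orbT.
rewrite /=.
have -> : a * t ^+ 2 + b * t * 1 + c * 1 ^+ 2 = a * (t ^+ 2 + b / a * t + c / a).
  by field.
by rewrite ht mulr0.
Qed.

Lemma rat2_P_neq0 {C : numClosedFieldType} {F : hmap C} :
  is_rat2 F -> F.1 <> (0, 0, 0).
Proof.
case: F => [[[a b] c] [[d e] f]] /= H E; case: E => ea eb ec; subst.
have [v [v0 hv]] := form_root d e f.
apply: (H v v0); case: v v0 hv => x y v0 hv.
move: hv; rewrite /hev /= => ->; congr (_, _); ring.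
Qed.

Lemma rat2_Q_neq0 {C : numClosedFieldType} {F : hmap C} :
  is_rat2 F -> F.2 <> (0, 0, 0).
Proof.
case: F => [[[a b] c] [[d e] f]] /= H E; case: E => ea eb ec; subst.
have [v [v0 hv]] := form_root a b c.
apply: (H v v0); case: v v0 hv => x y v0 hv.
move: hv; rewrite /hev /= => ->; congr (_, _); ring.
Qed.

Definition q3 {C : numClosedFieldType} (c3 c2 c1 c0 x y : C) :=
  c3 * x ^+ 3 + c2 * x ^+ 2 * y + c1 * x * y ^+ 2 + c0 * y ^+ 3.

Lemma cubic0 {C : numClosedFieldType} (c3 c2 c1 c0 : C) :
  (forall x y, q3 c3 c2 c1 c0 x y = 0) -> [/\ c3 = 0, c2 = 0, c1 = 0 & c0 = 0].
Proof.
move=> H.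
have e3 : c3 = q3 c3 c2 c1 c0 1 0 by rewrite /q3; ring.
have e0 : c0 = q3 c3 c2 c1 c0 0 1 by rewrite /q3; ring.
rewrite H in e3; rewrite H in e0; subst.
have e1 : 2 * c1 = q3 0 c2 c1 0 1 1 + q3 0 c2 c1 0 1 (-1) by rewrite /q3; ring.
rewrite !H addr0 in e1.
have c10 : c1 = 0.
  by apply/eqP; move/eqP: e1; rewrite mulf_eq0 (negbTE (two_neq0 C)).
subst.
have e2 : c2 = q3 0 c2 0 0 1 1 by rewrite /q3; ring.
by rewrite H in e2.
Qed.

Definition q4 {C : numClosedFieldType} (c4 c3 c2 c1 c0 x y : C) :=
  c4 * x ^+ 4 + c3 * x ^+ 3 * y + c2 * x ^+ 2 * y ^+ 2 + c1 * x * y ^+ 3 + c0 * y ^+ 4.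

Lemma quartic0 {C : numClosedFieldType} {c4 c3 c2 c1 c0 : C} :
  (forall x y, (x, y) <> (0, 0) -> q4 c4 c3 c2 c1 c0 x y = 0) ->
  [/\ c4 = 0, c3 = 0, c2 = 0, c1 = 0 & c0 = 0].
Proof.
move=> H.
have n10 : ((1 : C), (0 : C)) <> (0, 0) by apply/pair_neq0; rewrite oner_eq0.
have n01 : ((0 : C), (1 : C)) <> (0, 0) by apply/pair_neq0; rewrite oner_eq0 orbT.
have n11 : ((1 : C), (1 : C)) <> (0, 0) by apply/pair_neq0; rewrite oner_eq0.
have n1m : ((1 : C), (-1 : C)) <> (0, 0) by apply/pair_neq0; rewrite oner_eq0.
have n12 : ((1 : C), (2 : C)) <> (0, 0) by apply/pair_neq0; rewrite oner_eq0.
have e4 : c4 = q4 c4 c3 c2 c1 c0 1 0 by rewrite /q4; ring.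
have e0 : c0 = q4 c4 c3 c2 c1 c0 0 1 by rewrite /q4; ring.
rewrite H // in e4; rewrite H // in e0; subst.
have e2 : 2 * c2 = q4 0 c3 c2 c1 0 1 1 + q4 0 c3 c2 c1 0 1 (-1) by rewrite /q4; ring.
rewrite !H // addr0 in e2.
have c20 : c2 = 0.
  by apply/eqP; move/eqP: e2; rewrite mulf_eq0 (negbTE (two_neq0 C)).
subst.
have e1 : 6 * c1 = q4 0 c3 0 c1 0 1 2 - 2 * q4 0 c3 0 c1 0 1 1 by rewrite /q4; ring.
rewrite !H // mulr0 subrr in e1.
have c10 : c1 = 0.
  by apply/eqP; move/eqP: e1; rewrite mulf_eq0 pnatr_eq0.
subst.
have e3 : c3 = q4 0 c3 0 0 0 1 1 by rewrite /q4; ring.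
by rewrite H in e3.
Qed.

Definition sc {C : numClosedFieldType} (c : C) (v : pt C) : pt C := (c * v.1, c * v.2).
Definition Dd {C : numClosedFieldType} (u w : pt C) : C := u.1 * w.2 - u.2 * w.1.
Definition madj {C : numClosedFieldType} (h : mob C) : mob C :=
  let: (a, b, c, d) := h in (d, - b, - c, a).
Definition mmul {C : numClosedFieldType} (g h : mob C) : mob C :=
  let: (a1, b1, c1, d1) := g in let: (a2, b2, c2, d2) := h in
  (a1 * a2 + b1 * c2, a1 * b2 + b1 * d2, c1 * a2 + d1 * c2, c1 * b2 + d1 * d2).
Definition mconj {C : numClosedFieldType} (h g : mob C) : mob C := mmul h (mmul g (madj h)).
Definition compf {C : numClosedFieldType} (q : form2 C) (m : mob C) : form2 C :=
  let: (a, b, c) := q in let: (al, be, ga, de) := m in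
  (a * al ^+ 2 + b * al * ga + c * ga ^+ 2,
   2 * a * al * be + b * (al * de + be * ga) + 2 * c * ga * de,
   a * be ^+ 2 + b * be * de + c * de ^+ 2).
Definition lin2 {C : numClosedFieldType} (s t : C) (q r : form2 C) : form2 C :=
  let: (a1, b1, c1) := q in let: (a2, b2, c2) := r in
  (s * a1 + t * a2, s * b1 + t * b2, s * c1 + t * c2).
Definition conjF {C : numClosedFieldType} (h : mob C) (F : hmap C) : hmap C :=
  let: (h1, h2, h3, h4) := h in
  (lin2 h1 h2 (compf F.1 (madj h)) (compf F.2 (madj h)),
   lin2 h3 h4 (compf F.1 (madj h)) (compf F.2 (madj h))).
Definition lam {C : numClosedFieldType} (F : hmap C) (v : pt C) : C :=
  if v.2 != 0 then (hev F v).2 / v.2 else (hev F v).1 / v.1.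
Definition Lf {C : numClosedFieldType} (v : pt C) (x y : C) : C := v.2 * x - v.1 * y.
Definition fpid {C : numClosedFieldType} (F : hmap C) (v1 v2 v3 : pt C) (k : C) :=
  forall x y, fixpoly F (x, y) = k * (Lf v1 x y * Lf v2 x y * Lf v3 x y).

Lemma fixed_pointsE {C : numClosedFieldType} (F : hmap C) v1 v2 v3 :
  fixed_points F v1 v2 v3 <->
  [/\ v1 <> (0, 0), v2 <> (0, 0), v3 <> (0, 0) &
   exists2 k : C, k != 0 & fpid F v1 v2 v3 k].
Proof. by []. Qed.

Lemma mob_ev_mmul {C : numClosedFieldType} (g h : mob C) v :
  mob_ev (mmul g h) v = mob_ev g (mob_ev h v).
Proof.
case: g => [[[a1 b1] c1] d1]; case: h => [[[a2 b2] c2] d2]; case: v => x y.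
rewrite /=; congr (_, _); ring.
Qed.

Lemma madjK_ev {C : numClosedFieldType} (h : mob C) v :
  mob_ev (madj h) (mob_ev h v) = sc (mob_det h) v.
Proof.
case: h => [[[a b] c] d]; case: v => x y; rewrite /= /sc /=; congr (_, _); ring.
Qed.

Lemma madjK_ev' {C : numClosedFieldType} (h : mob C) v :
  mob_ev h (mob_ev (madj h) v) = sc (mob_det h) v.
Proof.
case: h => [[[a b] c] d]; case: v => x y; rewrite /= /sc /=; congr (_, _); ring.
Qed.

Lemma mob_ev_sc {C : numClosedFieldType} (g : mob C) c v :
  mob_ev g (sc c v) = sc c (mob_ev g v).
Proof.
case: g => [[[a b] c'] d]; case: v => x y; rewrite /= /sc /=; congr (_, _); ring.
Qed.

Lemma hev_sc {C : numClosedFieldType} (F : hmap C) c v :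
  hev F (sc c v) = sc (c ^+ 2) (hev F v).
Proof.
case: F => [[[a b] c'] [[d e] f]]; case: v => x y; rewrite /= /sc /hev /=.
congr (_, _); ring.
Qed.

Lemma sc_sc {C : numClosedFieldType} (c d : C) v : sc c (sc d v) = sc (c * d) v.
Proof. case: v => x y; rewrite /sc /=; congr (_, _); ring. Qed.

Lemma Dd_sc {C : numClosedFieldType} (c d : C) u w :
  Dd (sc c u) (sc d w) = c * d * Dd u w.
Proof. case: u => x y; case: w => x' y'; rewrite /Dd /sc /=; ring. Qed.

Lemma Dd_mob {C : numClosedFieldType} (h : mob C) u w :
  Dd (mob_ev h u) (mob_ev h w) = mob_det h * Dd u w.
Proof.
case: h => [[[a b] c] d]; case: u => x y; case: w => x' y'; rewrite /Dd /=; ring.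
Qed.

Lemma sc_neq0 {C : numClosedFieldType} (c : C) v :
  c != 0 -> v <> (0, 0) -> sc c v <> (0, 0).
Proof.
case: v => x y c0 /pair_neq0 H; apply/pair_neq0; rewrite /sc /= !mulf_eq0 (negbTE c0) /=.
exact: H.
Qed.

Lemma mob_ev0 {C : numClosedFieldType} (g : mob C) : mob_ev g (0, 0) = (0, 0).
Proof. case: g => [[[a b] c] d]; rewrite /=; congr (_, _); ring. Qed.

Lemma mob_ev_neq0 {C : numClosedFieldType} {h : mob C} {v} :
  mob_det h != 0 -> v <> (0, 0) -> mob_ev h v <> (0, 0).
Proof.
move=> d0 v0 E; have := @sc_neq0 _ _ _ d0 v0; apply; rewrite -madjK_ev E mob_ev0 //.
Qed.

Lemma madj_neq0 {C : numClosedFieldType} {h : mob C} {w} :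
  mob_det h != 0 -> w <> (0, 0) -> mob_ev (madj h) w <> (0, 0).
Proof.
move=> d0 w0 E; have := @sc_neq0 _ _ _ d0 w0; apply; rewrite -madjK_ev' E mob_ev0 //.
Qed.

Lemma hev_conjF {C : numClosedFieldType} (h : mob C) F w :
  hev (conjF h F) w = mob_ev h (hev F (mob_ev (madj h) w)).
Proof.
case: h => [[[h1 h2] h3] h4]; case: F => [[[a b] c] [[d e] f]]; case: w => x y.
rewrite /hev /=; congr (_, _); ring.
Qed.

Lemma mob_ev_mconj {C : numClosedFieldType} (h g : mob C) v :
  mob_ev (mconj h g) v = mob_ev h (mob_ev g (mob_ev (madj h) v)).
Proof. by rewrite /mconj !mob_ev_mmul. Qed.

Lemma mob_det_conj {C : numClosedFieldType} (h g : mob C) :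
  mob_det (mconj h g) = mob_det h ^+ 2 * mob_det g.
Proof.
case: h => [[[a b] c] d]; case: g => [[[a' b'] c'] d']; rewrite /=; ring.
Qed.

Lemma rat2_conj {C : numClosedFieldType} {h : mob C} {F} :
  mob_det h != 0 -> is_rat2 F -> is_rat2 (conjF h F).
Proof.
move=> d0 HF w w0; rewrite hev_conjF; apply: mob_ev_neq0 => //.
by apply: HF; apply: madj_neq0.
Qed.

Lemma commutes_conj {C : numClosedFieldType} {h g : mob C} {F} :
  mob_det h != 0 -> commutes g F -> commutes (mconj h g) (conjF h F).
Proof.
move=> d0 Hc w w0; rewrite /same_point.
set u := mob_ev (madj h) w.
have u0 : u <> (0, 0) by apply: madj_neq0.
have := Hc u u0; rewrite /same_point => E.
rewrite !mob_ev_mconj hev_conjF -/u madjK_ev mob_ev_sc hev_conjF madjK_ev hev_sc.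
rewrite !mob_ev_sc.
have -> : forall p q : pt C, p.1 * q.2 - p.2 * q.1 = Dd p q by [].
by rewrite Dd_sc Dd_mob /Dd E !mulr0.
Qed.

Lemma mconj_back {C : numClosedFieldType} (h g : mob C) :
  mmul (madj h) (mmul (mconj h g) h) =
  let: (al, be, ga, de) := g in
  (mob_det h ^+ 2 * al, mob_det h ^+ 2 * be, mob_det h ^+ 2 * ga, mob_det h ^+ 2 * de).
Proof.
case: h => [[[a b] c] d]; case: g => [[[al be] ga] de]; rewrite /=; congr (_, _, _, _); ring.
Qed.

Lemma nonid_conj {C : numClosedFieldType} {h g : mob C} :
  mob_det h != 0 -> ~ mob_is_id g -> ~ mob_is_id (mconj h g).
Proof.
move=> d0 Hg.
have := mconj_back h g.
case: (mconj h g) => [[[a' b'] c'] d'] /= E [E1 [E2 E3]]; subst.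
apply: Hg; move: E d0.
case: h => [[[a b] c] d]; case: g => [[[al be] ga] de] /= E d0.
have d2 : (a * d - b * c) ^+ 2 != 0 by apply: expf_neq0.
case: E => e1 e2 e3 e4.
have key : forall t u : C, (a * d - b * c) ^+ 2 * t = (a * d - b * c) ^+ 2 * u -> t = u.
  by move=> t u; apply: (mulfI d2).
split; [|split].
- apply: key; rewrite -e2; ring.
- apply: key; rewrite -e3; ring.
- apply: key; rewrite -e1 -e4; ring.
Qed.

Lemma fp_coef {C : numClosedFieldType} {a b c d e f x1 y1 x2 y2 x3 y3 k : C} :
  fpid ((a, b, c), (d, e, f)) (x1, y1) (x2, y2) (x3, y3) k ->
  [/\ d = - (k * (y1 * y2 * y3)),
      a = e - k * (x1 * y2 * y3 + y1 * x2 * y3 + y1 * y2 * x3),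
      b = f + k * (x1 * x2 * y3 + x1 * y2 * x3 + y1 * x2 * x3) &
      c = - (k * (x1 * x2 * x3))].
Proof.
move=> H.
have := @cubic0 C (- d - k * (y1 * y2 * y3))
  (a - e + k * (x1 * y2 * y3 + y1 * x2 * y3 + y1 * y2 * x3))
  (b - f - k * (x1 * x2 * y3 + x1 * y2 * x3 + y1 * x2 * x3))
  (c + k * (x1 * x2 * x3)).
case.
  move=> x y; have := H x y; rewrite /fixpoly /Lf /= => E.
  apply/eqP; rewrite -subr_eq0 subr0; apply/eqP.
  rewrite -[LHS]subr0 -(subrr (y * (a * x ^+ 2 + b * x * y + c * y ^+ 2) -
      x * (d * x ^+ 2 + e * x * y + f * y ^+ 2))).
  rewrite [X in _ - (_ - X)]E /q3; ring.
move=> h3 h2 h1 h0.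
split; apply/eqP; rewrite -subr_eq0; apply/eqP.
- by rewrite -[RHS]oppr0 -h3; ring.
- by rewrite -h2; ring.
- by rewrite -h1; ring.
- by rewrite -h0; ring.
Qed.

Lemma fpid_root {C : numClosedFieldType} {F : hmap C} {v1 v2 v3 k} :
  fpid F v1 v2 v3 k -> fixpoly F v1 = 0.
Proof.
case: v1 => x y H; rewrite H /Lf /=.
by rewrite (_ : y * x - x * y = 0) ?mul0r ?mulr0 //; ring.
Qed.

Lemma fpid_perm12 {C : numClosedFieldType} {F : hmap C} {v1 v2 v3 k} :
  fpid F v1 v2 v3 k -> fpid F v2 v1 v3 k.
Proof. by move=> H x y; rewrite H; ring. Qed.

Lemma fpid_perm13 {C : numClosedFieldType} {F : hmap C} {v1 v2 v3 k} :
  fpid F v1 v2 v3 k -> fpid F v3 v2 v1 k.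
Proof. by move=> H x y; rewrite H; ring. Qed.

Lemma fpid_perm23 {C : numClosedFieldType} {F : hmap C} {v1 v2 v3 k} :
  fpid F v1 v2 v3 k -> fpid F v1 v3 v2 k.
Proof. by move=> H x y; rewrite H; ring. Qed.

Lemma lam_fin {C : numClosedFieldType} (F : hmap C) (x y : C) :
  y != 0 -> lam F (x, y) = eval2 F.2 (x, y) / y.
Proof. by move=> y0; rewrite /lam ifT. Qed.

Lemma lam_inf {C : numClosedFieldType} (F : hmap C) (x : C) :
  lam F (x, 0) = eval2 F.1 (x, 0) / x.
Proof. by rewrite /lam ifF //= eqxx. Qed.

Lemma lamP {C : numClosedFieldType} {F : hmap C} {v} :
  v <> (0, 0) -> fixpoly F v = 0 -> hev F v = sc (lam F v) v.
Proof.
case: v => x y /pair_neq0 v0.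
have [y0|y0] := eqVneq y 0.
  subst; rewrite eqxx orbF in v0; rewrite lam_inf /fixpoly /sc /hev /=.
  move: (eval2 F.1 (x, 0)) (eval2 F.2 (x, 0)) => P Q E.
  have Q0 : Q = 0.
    by move: E; rewrite mul0r sub0r => /eqP; rewrite oppr_eq0 mulf_eq0 (negbTE v0) /= => /eqP.
  by subst; congr (_, _); field.
rewrite lam_fin // /fixpoly /sc /hev /=.
move: (eval2 F.1 (x, y)) (eval2 F.2 (x, y)) => P Q E.
have -> : P = x * Q / y.
  by apply: (mulfI y0); rewrite -[y * P]subr0 -E; field.
by congr (_, _); field.
Qed.

Lemma lam_uniq {C : numClosedFieldType} {F : hmap C} {v m} :
  v <> (0, 0) -> hev F v = sc m v -> lam F v = m.
Proof.
case: v => x y /pair_neq0 v0 E.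
have [y0|y0] := eqVneq y 0.
  subst; rewrite eqxx orbF in v0; rewrite lam_inf.
  by move: E; rewrite /hev /sc /= => -[-> _]; field.
by rewrite lam_fin //; move: E; rewrite /hev /sc /= => -[_ ->]; field.
Qed.

Lemma lam_neq0 {C : numClosedFieldType} {F : hmap C} {v} :
  is_rat2 F -> v <> (0, 0) -> fixpoly F v = 0 -> lam F v != 0.
Proof.
move=> HF v0 fv; apply/eqP => l0.
apply: (HF v v0); rewrite lamP // l0 /sc !mul0r //.
Qed.

Lemma multiplier_fin {C : numClosedFieldType} (a b c d e f x y : C) :
  y != 0 ->
  multiplier ((a, b, c), (d, e, f)) (x, y) =
  ((a*e - b*d)*(x/y)^+2 + 2*(a*f - c*d)*(x/y) + (b*f - c*e)) / (d*(x/y)^+2 + e*(x/y) + f)^+2.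
Proof.
move=> y0; rewrite /multiplier ifT //= /ratderiv /dehom0 !derivE !hornerE /=.
congr (_ / _); ring.
Qed.

Lemma multiplier_inf {C : numClosedFieldType} (a b c d e f x : C) :
  multiplier ((a, b, c), (d, e, f)) (x, 0) = (e*a - d*b) / a^+2.
Proof.
rewrite /multiplier /= eqxx /ratderiv /dehomInf !derivE !hornerE /=.
congr (_ / _); ring.
Qed.

Lemma mult_formula {C : numClosedFieldType} {F : hmap C} {v1 v2 v3 k} :
  is_rat2 F -> v1 <> (0, 0) -> fpid F v1 v2 v3 k ->
  multiplier F v1 = 1 + k * Dd v1 v2 * Dd v1 v3 / lam F v1.
Proof.
move=> HF v10 H.
have fv := fpid_root H.
have l0 := lam_neq0 HF v10 fv.
move: HF v10 H fv l0.
case: F => [[[a b] c] [[d e] f]]; case: v1 => x1 y1; case: v2 => x2 y2; case: v3 => x3 y3.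
move=> HF v10 H fv l0.
case: (fp_coef H) => hd ha hb hc.
have [y0|y0] := eqVneq y1 0.
  subst y1; rewrite multiplier_inf.
  rewrite lam_inf /= in l0 *.
  move/pair_neq0: v10; rewrite eqxx orbF => x0.
  have a0 : a != 0.
    by move: l0; apply: contra => /eqP ->; rewrite [X in X / x1](_ : _ = 0) ?mul0r //; ring.
  subst.
  rewrite /Dd /=.
  field; apply/andP; split => //.
  by move: a0; rewrite !mul0r !addr0.
rewrite multiplier_fin // lam_fin // /= in l0 *.
have Q0 : d * x1 ^+ 2 + e * x1 * y1 + f * y1 ^+ 2 != 0.
  by move: l0; apply: contra => /eqP ->; rewrite mul0r.
have -> : d * (x1 / y1) ^+ 2 + e * (x1 / y1) + f = (d * x1 ^+ 2 + e * x1 * y1 + f * y1 ^+ 2) / y1 ^+ 2.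
  by field.
subst.
rewrite /Dd /=.
by field; apply/andP; split.
Qed.

Lemma fixpoly_hev {C : numClosedFieldType} (F : hmap C) v :
  fixpoly F v = v.2 * (hev F v).1 - v.1 * (hev F v).2.
Proof. by []. Qed.

Lemma fixpoly_conjF {C : numClosedFieldType} (h : mob C) F w :
  fixpoly (conjF h F) w = fixpoly F (mob_ev (madj h) w).
Proof.
rewrite !fixpoly_hev hev_conjF.
move: (hev F (mob_ev (madj h) w)) => [P Q].
case: h => [[[h1 h2] h3] h4]; case: w => x y; rewrite /=; ring.
Qed.

Lemma Lf_conj {C : numClosedFieldType} (h : mob C) v x y :
  Lf (mob_ev h v) x y = Lf v (mob_ev (madj h) (x, y)).1 (mob_ev (madj h) (x, y)).2.
Proof.
case: h => [[[h1 h2] h3] h4]; case: v => a b; rewrite /Lf /=; ring.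
Qed.

Lemma fpid_conj {C : numClosedFieldType} (h : mob C) {F v1 v2 v3 k} :
  fpid F v1 v2 v3 k ->
  fpid (conjF h F) (mob_ev h v1) (mob_ev h v2) (mob_ev h v3) k.
Proof.
move=> H x y; rewrite fixpoly_conjF !Lf_conj.
by case: (mob_ev (madj h) (x, y)) => u1 u2; exact: H.
Qed.

Lemma lam_conj {C : numClosedFieldType} (h : mob C) F v :
  mob_det h != 0 -> v <> (0, 0) -> fixpoly F v = 0 ->
  lam (conjF h F) (mob_ev h v) = mob_det h ^+ 2 * lam F v.
Proof.
move=> d0 v0 fv; apply: lam_uniq; first exact: mob_ev_neq0.
by rewrite hev_conjF madjK_ev hev_sc (lamP v0 fv) !mob_ev_sc !sc_sc.
Qed.

Lemma mult_conj {C : numClosedFieldType} {h : mob C} {F v1 v2 v3 k} :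
  mob_det h != 0 -> is_rat2 F -> v1 <> (0, 0) -> fpid F v1 v2 v3 k ->
  multiplier (conjF h F) (mob_ev h v1) = multiplier F v1.
Proof.
move=> d0 HF v10 H.
have fv := fpid_root H.
have l0 := lam_neq0 HF v10 fv.
rewrite (mult_formula (rat2_conj d0 HF) (mob_ev_neq0 d0 v10) (fpid_conj h H)).
rewrite (mult_formula HF v10 H) !Dd_mob lam_conj //.
by field; apply/andP; split.
Qed.

Lemma sigmas_conj {C : numClosedFieldType} {h : mob C} {F s1 s2} :
  mob_det h != 0 -> is_rat2 F -> sigmas F s1 s2 -> sigmas (conjF h F) s1 s2.
Proof.
move=> d0 HF [v1 [v2 [v3 [[n1 n2 n3 [k k0 H]] /= [e1 e2]]]]].
exists (mob_ev h v1), (mob_ev h v2), (mob_ev h v3); split.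
  split; try exact: mob_ev_neq0.
  by exists k => //; exact: fpid_conj.
rewrite /= (mult_conj d0 HF n1 H) (mult_conj d0 HF n2 (fpid_perm12 H)).
by rewrite (mult_conj d0 HF n3 (fpid_perm13 H)).
Qed.

Lemma form1_inf {C : numClosedFieldType} (a c e x : C) :
  a != 0 -> multiplier ((a, 0, c), (0, e, 0)) (x, 0) = e / a.
Proof. by move=> a0; rewrite multiplier_inf; field. Qed.

Lemma form1_fin {C : numClosedFieldType} (a c e x y : C) :
  c != 0 -> e != 0 -> y != 0 ->
  fixpoly ((a, 0, c), (0, e, 0)) (x, y) = 0 ->
  multiplier ((a, 0, c), (0, e, 0)) (x, y) = 2 * a / e - 1.
Proof.
move=> c0 e0 y0 E.
rewrite multiplier_fin //.
have E2 : (a - e) * x ^+ 2 + c * y ^+ 2 = 0.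
  move: E; rewrite /fixpoly /= => E.
  have : y * ((a - e) * x ^+ 2 + c * y ^+ 2) = 0 by rewrite -E; ring.
  by move/eqP; rewrite mulf_eq0 (negbTE y0) /= => /eqP.
have x0 : x != 0.
  apply/eqP => x0; move: E2; rewrite x0 => /eqP.
  rewrite expr0n /= mulr0 add0r mulf_eq0 (negbTE c0) /= expf_eq0 /=.
  by rewrite (negbTE y0).
have hc : c = (e - a) * x ^+ 2 / y ^+ 2.
  have -> : c = c * y ^+ 2 / y ^+ 2 by field.
  congr (_ / _); apply: subr0_eq; rewrite -E2; ring.
rewrite hc; field.
by rewrite e0 x0 y0.
Qed.

Lemma form1_sig {C : numClosedFieldType} (a c e : C) v1 v2 v3 k :
  a != 0 -> c != 0 -> e != 0 -> k != 0 ->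
  v1 <> (0, 0) -> v2 <> (0, 0) -> v3 <> (0, 0) ->
  fpid ((a, 0, c), (0, e, 0)) v1 v2 v3 k ->
  let F := ((a, 0, c), (0, e, 0)) in
  multiplier F v1 + multiplier F v2 + multiplier F v3 = (param (a / e)).1 /\
  multiplier F v1 * multiplier F v2 + multiplier F v1 * multiplier F v3 +
  multiplier F v2 * multiplier F v3 = (param (a / e)).2.
Proof.
move=> a0 c0 e0 k0 n1 n2 n3 H F.
have f1 := fpid_root H.
have f2 := fpid_root (fpid_perm12 H).
have f3 := fpid_root (fpid_perm13 H).
move: n1 n2 n3 f1 f2 f3 H; rewrite /F.
case: v1 => x1 y1; case: v2 => x2 y2; case: v3 => x3 y3 => n1 n2 n3 f1 f2 f3 H.
case: (fp_coef H) => hd ha _ _.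
rewrite /param /=.
have M : forall x y, (x, y) <> (0, 0) -> fixpoly ((a, 0, c), (0, e, 0)) (x, y) = 0 ->
    multiplier ((a, 0, c), (0, e, 0)) (x, y) = e / a \/
    multiplier ((a, 0, c), (0, e, 0)) (x, y) = 2 * a / e - 1.
  move=> x y _ fx; have [y0|y0] := eqVneq y 0.
    by subst; left; apply: form1_inf.
  by right; apply: form1_fin.
have [ae|ae] := eqVneq a e.
  have M1 : forall x y, (x, y) <> (0, 0) -> fixpoly ((a, 0, c), (0, e, 0)) (x, y) = 0 ->
      multiplier ((a, 0, c), (0, e, 0)) (x, y) = 1.
    by move=> x y n fx; case: (M x y n fx) => ->; rewrite ae; field.
  rewrite (M1 _ _ n1 f1) (M1 _ _ n2 f2) (M1 _ _ n3 f3) ae.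
  by split; field; fside.
have Y : y1 * y2 * y3 = 0.
  by move/eqP: hd; rewrite eq_sym oppr_eq0 mulf_eq0 (negbTE k0) /= => /eqP.
have Hae : k * (x1 * y2 * y3 + y1 * x2 * y3 + y1 * y2 * x3) != 0.
  apply: contra ae => /eqP E; rewrite ha E subr0.
  done.
have [y10|y10] := eqVneq y1 0.
  subst y1; rewrite !(mulr0, mul0r, add0r, addr0) mulf_eq0 negb_or in Hae.
  case/andP: Hae => _; rewrite !mulf_eq0 !negb_or => /andP [/andP [_ y2n] y3n].
  rewrite (form1_inf _ _ _ _ a0) (form1_fin _ _ _ _ _ c0 e0 y2n f2) (form1_fin _ _ _ _ _ c0 e0 y3n f3).
  by split; field; fside.
have [y20|y20] := eqVneq y2 0.
  subst y2; rewrite !(mulr0, mul0r, add0r, addr0) mulf_eq0 negb_or in Hae.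
  case/andP: Hae => _; rewrite !mulf_eq0 !negb_or => /andP [/andP [_ _] y3n].
  rewrite (form1_inf _ _ _ _ a0) (form1_fin _ _ _ _ _ c0 e0 y10 f1) (form1_fin _ _ _ _ _ c0 e0 y3n f3).
  by split; field; fside.
have y30 : y3 = 0.
  by move/eqP: Y; rewrite !mulf_eq0 (negbTE y10) (negbTE y20) /= => /eqP.
subst y3.
rewrite (form1_inf _ _ _ _ a0) (form1_fin _ _ _ _ _ c0 e0 y10 f1) (form1_fin _ _ _ _ _ c0 e0 y20 f2).
by split; field; fside.
Qed.

Lemma invsq_mult {C : numClosedFieldType} (c d x y : C) :
  c != 0 -> d != 0 -> y != 0 ->
  fixpoly ((0, 0, c), (d, 0, 0)) (x, y) = 0 ->
  multiplier ((0, 0, c), (d, 0, 0)) (x, y) = -2.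
Proof.
move=> c0 d0 y0 E.
rewrite multiplier_fin //.
have E2 : c * y ^+ 3 = d * x ^+ 3.
  by apply: subr0_eq; rewrite -E /fixpoly /=; ring.
have x0 : x != 0.
  apply/eqP => x0; move: E2; rewrite x0 expr0n /= mulr0 => /eqP.
  by rewrite mulf_eq0 (negbTE c0) expf_eq0 /= (negbTE y0).
have hc : c = d * x ^+ 3 / y ^+ 3.
  by rewrite -E2; field.
by rewrite hc; field; rewrite d0 x0 y0.
Qed.

Lemma invsq_sig {C : numClosedFieldType} (c d : C) v1 v2 v3 k :
  c != 0 -> d != 0 -> k != 0 ->
  fpid ((0, 0, c), (d, 0, 0)) v1 v2 v3 k ->
  let F := ((0, 0, c), (d, 0, 0)) in
  multiplier F v1 + multiplier F v2 + multiplier F v3 = -6 /\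
  multiplier F v1 * multiplier F v2 + multiplier F v1 * multiplier F v3 +
  multiplier F v2 * multiplier F v3 = 12.
Proof.
move=> c0 d0 k0 H F.
have f1 := fpid_root H.
have f2 := fpid_root (fpid_perm12 H).
have f3 := fpid_root (fpid_perm13 H).
move: f1 f2 f3 H; rewrite /F.
case: v1 => x1 y1; case: v2 => x2 y2; case: v3 => x3 y3 => f1 f2 f3 H.
case: (fp_coef H) => hd _ _ _.
have : y1 * y2 * y3 != 0.
  apply: contra d0 => /eqP E; rewrite hd -mulrA (mulrA y1) E mulr0 oppr0.
  done.
rewrite !mulf_eq0 !negb_or => /andP [/andP [y1n y2n] y3n].
rewrite (invsq_mult _ _ _ _ c0 d0 y1n f1) (invsq_mult _ _ _ _ c0 d0 y2n f2) (invsq_mult _ _ _ _ c0 d0 y3n f3).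
by split; ring.
Qed.

Lemma rat2_common {C : numClosedFieldType} (F : hmap C) v :
  is_rat2 F -> v <> (0, 0) -> eval2 F.1 v = 0 -> eval2 F.2 v = 0 -> False.
Proof. by move=> HF v0 e1 e2; apply: (HF v v0); rewrite /hev e1 e2. Qed.

Lemma rat2_10 {C : numClosedFieldType} {a b c d e f : C} :
  is_rat2 ((a, b, c), (d, e, f)) -> a = 0 -> d = 0 -> False.
Proof.
move=> HF a0 d0; apply: (@rat2_common _ _ (1, 0) HF).
- by apply/pair_neq0; rewrite oner_eq0.
- by rewrite /= a0; ring.
- by rewrite /= d0; ring.
Qed.

Lemma rat2_01 {C : numClosedFieldType} {a b c d e f : C} :
  is_rat2 ((a, b, c), (d, e, f)) -> c = 0 -> f = 0 -> False.
Proof.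
move=> HF c0 f0; apply: (@rat2_common _ _ (0, 1) HF).
- by apply/pair_neq0; rewrite oner_eq0 orbT.
- by rewrite /= c0; ring.
- by rewrite /= f0; ring.
Qed.

Lemma mulf0_l {C : numClosedFieldType} {x y : C} : y != 0 -> x * y = 0 -> x = 0.
Proof. by move=> y0 /eqP; rewrite mulf_eq0 (negbTE y0) orbF => /eqP. Qed.

Lemma mul0_or {C : numClosedFieldType} {x y : C} : x * y = 0 -> x = 0 \/ y = 0.
Proof. by move/eqP; rewrite mulf_eq0 => /orP [] /eqP; [left | right]. Qed.

Lemma form1_sigmas {C : numClosedFieldType} (a c e s1 s2 : C) :
  a != 0 -> c != 0 -> e != 0 -> sigmas ((a, 0, c), (0, e, 0)) s1 s2 ->
  exists2 k : C, k != 0 & (s1, s2) = param k.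
Proof.
move=> a0 c0 e0 [v1 [v2 [v3 [[n1 n2 n3 [k k0 H]] /= [-> ->]]]]].
exists (a / e); first by rewrite mulf_neq0 ?invr_eq0.
have [E1 E2] := form1_sig _ _ _ _ _ _ _ a0 c0 e0 k0 n1 n2 n3 H.
by rewrite [RHS]surjective_pairing -E1 -E2.
Qed.

Lemma invsq_sigmas {C : numClosedFieldType} (c d s1 s2 : C) :
  c != 0 -> d != 0 -> sigmas ((0, 0, c), (d, 0, 0)) s1 s2 ->
  exists2 k : C, k != 0 & (s1, s2) = param k.
Proof.
move=> c0 d0 [v1 [v2 [v3 [[n1 n2 n3 [k k0 H]] /= [-> ->]]]]].
have [E1 E2] := invsq_sig _ _ _ _ _ _ c0 d0 k0 H.
exists (- 2^-1); first by rewrite oppr_eq0 invr_eq0 pnatr_eq0.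
by rewrite /= E1 E2 /param; congr (_, _); field.
Qed.

Definition swapm {C : numClosedFieldType} : mob C := (0, 1, 1, 0).

Lemma conj_swap {C : numClosedFieldType} (b d f : C) :
  conjF swapm ((0, b, 0), (d, 0, f)) = ((f, 0, d), (0, b, 0)).
Proof. rewrite /conjF /swapm /=; congr (_, _, _, (_, _, _)); ring. Qed.

Lemma swap_det {C : numClosedFieldType} : mob_det (@swapm C) != 0.
Proof. by rewrite /swapm /= !mul0r sub0r mulr1 oppr_eq0 oner_eq0. Qed.

Lemma diag_case {C : numClosedFieldType} (a b c d e f al ga s1 s2 : C) :
  is_rat2 ((a, b, c), (d, e, f)) -> al != 0 -> ga != 0 -> al != ga ->
  commutes (al, 0, 0, ga) ((a, b, c), (d, e, f)) ->
  sigmas ((a, b, c), (d, e, f)) s1 s2 ->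
  exists2 k : C, k != 0 & (s1, s2) = param k.
Proof.
move=> HF al0 ga0 alga Hc Hs.
have alga' : al - ga != 0 by rewrite subr_eq0.
have Hq : forall x y, (x, y) <> (0, 0) ->
  q4 ((a * d) * (al ^+ 2 * (al - ga))) ((b * d) * (al * (al - ga) * (al + ga)))
     (c * d * (al ^+ 3 - ga ^+ 3) + al * ga * (al - ga) * (b * e - a * f))
     ((c * e) * (ga * (al - ga) * (al + ga))) ((c * f) * (ga ^+ 2 * (al - ga))) x y = 0.
  move=> x y n; have := Hc (x, y) n; rewrite /same_point /= => E.
  by apply: (etrans _ E); rewrite /q4; ring.
have [h4 h3 h2 h1 h0] := quartic0 Hq.
have ad : a * d = 0.
  by apply: (mulf0_l _ h4); rewrite mulf_neq0 // expf_neq0.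
have cf : c * f = 0.
  by apply: (mulf0_l _ h0); rewrite mulf_neq0 // expf_neq0.
have Pnz : (a, b, c) <> (0, 0, 0) := rat2_P_neq0 HF.
have Qnz : (d, e, f) <> (0, 0, 0) := rat2_Q_neq0 HF.
have [s0|s0] := eqVneq (al + ga) 0.
  have ga' : ga = - al by apply: subr0_eq; rewrite opprK addrC s0.
  have key : c * d - b * e + a * f = 0.
    have al3 : 2 * al ^+ 3 != 0 by rewrite mulf_neq0 ?two_neq0 ?expf_neq0.
    by apply: (mulf0_l al3); rewrite -[RHS]h2 ga'; ring.
  have [c0|c0] := eqVneq c 0.
    have f0 : f != 0 by apply/eqP => f0; exact: (rat2_01 HF c0 f0).
    have [a0|a0] := eqVneq a 0.
      have d0 : d != 0 by apply/eqP => d0; exact: (rat2_10 HF a0 d0).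
      subst a c.
      have : b * e = 0 by rewrite -[RHS]oppr0 -key; ring.
      case/mul0_or => [b0|e0].
        by subst; case: Pnz.
      subst e.
      have b0 : b != 0 by apply/eqP => b0; subst; case: Pnz.
      have := sigmas_conj swap_det HF Hs; rewrite conj_swap.
      exact: form1_sigmas.
    have d0 : d = 0 by case: (mul0_or ad) => // a0'; move: a0; rewrite a0' eqxx.
    subst c d.
    exfalso; apply: (@rat2_common _ _ (b, - a) HF).
    - by apply/pair_neq0; rewrite oppr_eq0 a0 orbT.
    - by rewrite /=; ring.
    - have -> : eval2 ((0 : C), e, f) (b, - a) = a * (0 * 0 - b * e + a * f).
        by rewrite /=; ring.
      by rewrite key mulr0.
  have f0 : f = 0 by case: (mul0_or cf) => // c0'; move: c0; rewrite c0' eqxx.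
  subst f.
  have [a0|a0] := eqVneq a 0.
    subst a.
    exfalso; apply: (@rat2_common _ _ (c, - b) HF).
    - by apply/pair_neq0; rewrite c0.
    - by rewrite /=; ring.
    - have -> : eval2 (d, e, (0 : C)) (c, - b) = c * (c * d - b * e + 0 * 0).
        by rewrite /=; ring.
      by rewrite key mulr0.
  have d0 : d = 0 by case: (mul0_or ad) => // a0'; move: a0; rewrite a0' eqxx.
  subst d.
  have : b * e = 0 by rewrite -[RHS]oppr0 -key; ring.
  case/mul0_or => [b0|e0]; last by subst; case: Qnz.
  subst b.
  have e0 : e != 0 by apply/eqP => e0; subst; case: Qnz.
  exact: (form1_sigmas _ _ _ _ _ a0 c0 e0 Hs).
have ce : c * e = 0.
  by apply: (mulf0_l _ h1); rewrite !mulf_neq0.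
have bd : b * d = 0.
  by apply: (mulf0_l _ h3); rewrite !mulf_neq0.
have [c0|c0] := eqVneq c 0.
  have f0 : f != 0 by apply/eqP => f0; exact: (rat2_01 HF c0 f0).
  have [a0|a0] := eqVneq a 0.
    have d0 : d != 0 by apply/eqP => d0; exact: (rat2_10 HF a0 d0).
    have b0 : b = 0 by case: (mul0_or bd) => // d0'; move: d0; rewrite d0' eqxx.
    by subst; case: Pnz.
  have d0 : d = 0 by case: (mul0_or ad) => // a0'; move: a0; rewrite a0' eqxx.
  subst c d.
  have key : b * e - a * f = 0.
    have nz : al * ga * (al - ga) != 0 by rewrite !mulf_neq0.
    by apply: (mulf0_l nz); rewrite -[RHS]h2; ring.
  exfalso; apply: (@rat2_common _ _ (b, - a) HF).
  - by apply/pair_neq0; rewrite oppr_eq0 a0 orbT.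
  - by rewrite /=; ring.
  - have -> : eval2 ((0 : C), e, f) (b, - a) = - a * (b * e - a * f).
      by rewrite /=; ring.
    by rewrite key mulr0.
have f0 : f = 0 by case: (mul0_or cf) => // c0'; move: c0; rewrite c0' eqxx.
have e0 : e = 0 by case: (mul0_or ce) => // c0'; move: c0; rewrite c0' eqxx.
subst e f.
have d0 : d != 0 by apply/eqP => d0; subst; case: Qnz.
have a0 : a = 0 by case: (mul0_or ad) => // d0'; move: d0; rewrite d0' eqxx.
have b0 : b = 0 by case: (mul0_or bd) => // d0'; move: d0; rewrite d0' eqxx.
subst a b.
exact: (invsq_sigmas _ _ _ _ c0 d0 Hs).
Qed.

Lemma para_case {C : numClosedFieldType} (a b c d e f t B : C) :
  is_rat2 ((a, b, c), (d, e, f)) -> t != 0 -> B != 0 ->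
  commutes (t, B, 0, t) ((a, b, c), (d, e, f)) -> False.
Proof.
move=> HF t0 B0 Hc.
have Hq : forall x y, (x, y) <> (0, 0) ->
  q4 ((d * d) * (B * t ^+ 2))
     (2*B*d*e*t^+2 + 2*B^+2*d^+2*t)
     (-B*a*e*t^+2 + B*b*d*t^+2 + 2*B*d*f*t^+2 + B*e^+2*t^+2 + 3*B^+2*d*e*t + B^+3*d^+2)
     (-2*B*a*f*t^+2 + 2*B*c*d*t^+2 + 2*B*e*f*t^+2 - B^+2*a*e*t + B^+2*b*d*t + 2*B^+2*d*f*t
       + B^+2*e^+2*t + B^+3*d*e)
     (-B*b*f*t^+2 + B*c*e*t^+2 + B*f^+2*t^+2 - B^+2*a*f*t + B^+2*c*d*t + B^+2*e*f*t + B^+3*d*f)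
     x y = 0.
  move=> x y n; have := Hc (x, y) n; rewrite /same_point /= => E.
  by apply: (etrans _ E); rewrite /q4; ring.
have [h4 h3 h2 h1 h0] := quartic0 Hq.
have Bt : B * t ^+ 2 != 0 by rewrite mulf_neq0 // expf_neq0.
have d0 : d = 0.
  by case: (mul0_or (mulf0_l Bt h4)).
subst d.
have a0 : a != 0 by apply/eqP => a0; exact: (rat2_10 HF a0 erefl).
have Qnz : (0, e, f) <> (0, 0, 0) := rat2_Q_neq0 HF.
have : (e * (e - a)) * (B * t ^+ 2) = 0 by rewrite -[RHS]h2; ring.
move/(mulf0_l Bt)/mul0_or => [e0|ea].
  subst e.
  have : (a * f) * (- 2 * (B * t ^+ 2)) = 0 by rewrite -[RHS]h1; ring.
  have nz : - 2 * (B * t ^+ 2) != 0 by rewrite mulf_neq0 // oppr_eq0 two_neq0.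
  move/(mulf0_l nz)/mul0_or => [a0'|f0]; first by move: a0; rewrite a0' eqxx.
  by subst; case: Qnz.
have ea' : e = a by apply: subr0_eq.
subst e.
have key : (c * a - b * f + f ^+ 2) * (B * t ^+ 2) = 0 by rewrite -[RHS]h0; ring.
move/(mulf0_l Bt): key => key.
apply: (@rat2_common _ _ (f, - a) HF).
- by apply/pair_neq0; rewrite oppr_eq0 a0 orbT.
- have -> : eval2 (a, b, c) (f, - a) = a * (c * a - b * f + f ^+ 2).
    by rewrite /=; ring.
  by rewrite key mulr0.
- by rewrite /=; ring.
Qed.

Lemma ut_case {C : numClosedFieldType} (F : hmap C) (al be de s1 s2 : C) :
  is_rat2 F -> mob_det (al, be, 0, de) != 0 -> ~ mob_is_id (al, be, 0, de) ->
  commutes (al, be, 0, de) F -> sigmas F s1 s2 ->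
  exists2 k : C, k != 0 & (s1, s2) = param k.
Proof.
move=> HF dt nid Hc Hs.
have dt' : al * de != 0 by move: dt; rewrite /= mulr0 subr0.
have al0 : al != 0 by move: dt'; rewrite mulf_eq0 negb_or => /andP [].
have de0 : de != 0 by move: dt'; rewrite mulf_eq0 negb_or => /andP [].
have [ad|ad] := eqVneq al de.
  subst de.
  have be0 : be != 0 by apply/eqP => be0; apply: nid.
  exfalso; move: HF Hc Hs; case: F => [[[a b] c] [[d e] f]] HF Hc _.
  exact: (para_case _ _ _ _ _ _ _ _ HF al0 be0 Hc).
have ad' : al - de != 0 by rewrite subr_eq0.
pose h : mob C := (1, be / (al - de), 0, 1).
have hd : mob_det h != 0 by rewrite /= mulr1 mulr0 subr0 oner_eq0.
have E : mconj h (al, be, 0, de) = (al, 0, 0, de).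
  by rewrite /mconj /= /h; congr (_, _, _, _); field.
have Hc' := commutes_conj hd Hc; rewrite E in Hc'.
have Hs' := sigmas_conj hd HF Hs.
have HF' := rat2_conj hd HF.
move: HF' Hc' Hs'; case: (conjF h F) => [[[a b] c] [[d e] f]] HF' Hc' Hs'.
exact: (diag_case _ _ _ _ _ _ _ _ _ _ HF' al0 de0 ad Hc' Hs').
Qed.

Lemma forward {C : numClosedFieldType} (F : hmap C) s1 s2 :
  is_rat2 F -> has_nontriv_aut F -> sigmas F s1 s2 ->
  exists2 k : C, k != 0 & (s1, s2) = param k.
Proof.
move=> HF [g [dt [nid Hc]]] Hs.
move: dt nid Hc; case: g => [[[al be] ga] de] dt0 nid Hc.
have dt : mob_det (al, be, ga, de) != 0 by apply/eqP.
have [ga0|ga0] := eqVneq ga 0.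
  by subst; apply: (ut_case _ _ _ _ _ _ HF dt nid Hc Hs).
have [t ht] := quad_root (- (al + de)) (al * de - be * ga).
pose h : mob C := (0, -1, - ga, t - de).
have hd : mob_det h != 0.
  by rewrite /= mul0r sub0r mulN1r opprK oppr_eq0.
have E3 : (mconj h (al, be, ga, de)).1.2 = 0.
  rewrite /mconj /h /=.
  transitivity (ga * (t ^+ 2 + - (al + de) * t + (al * de - be * ga))); first by ring.
  by rewrite ht mulr0.
have dt2 : mob_det (mconj h (al, be, ga, de)) != 0.
  by rewrite mob_det_conj mulf_neq0 // expf_neq0.
have nid' := nonid_conj hd nid.
have Hc' := commutes_conj hd Hc.
have Hs' := sigmas_conj hd HF Hs.
have HF' := rat2_conj hd HF.
move: E3 dt2 nid' Hc'.
case: (mconj h (al, be, ga, de)) => [[[al' be'] ga'] de'] /= E3.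
subst ga'.
move=> dt2 nid' Hc'.
exact: (ut_case _ _ _ _ _ _ HF' dt2 nid' Hc' Hs').
Qed.

Definition Fk {C : numClosedFieldType} (k : C) : hmap C := ((k, 0, k), (0, 1, 0)).

Lemma Fk_rat2 {C : numClosedFieldType} (k : C) : k != 0 -> is_rat2 (Fk k).
Proof.
move=> k0 [x y] /pair_neq0 v0 [] /= E1 E2.
have : x * y = 0 by rewrite -E2; ring.
case/mul0_or => [x0|y0]; subst.
  have : k * y ^+ 2 = 0 by rewrite -E1; ring.
  by move/eqP; rewrite mulf_eq0 (negbTE k0) expf_eq0 /= => /eqP y0; move: v0; rewrite y0 eqxx.
have : k * x ^+ 2 = 0 by rewrite -E1; ring.
by move/eqP; rewrite mulf_eq0 (negbTE k0) expf_eq0 /= => /eqP x0; move: v0; rewrite x0 eqxx.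
Qed.

Lemma Fk_aut {C : numClosedFieldType} (k : C) : has_nontriv_aut (Fk k).
Proof.
exists (-1, 0, 0, 1); split; [|split].
- rewrite /= mulr1 mulr0 subr0; apply/eqP; by rewrite oppr_eq0 oner_eq0.
- move=> [_ [_ E]].
  have h2 : (2 : C) = 0 by transitivity (1 - (-1) : C); [ring | rewrite E subrr].
  by move: (two_neq0 C); rewrite h2 eqxx.
- by move=> [x y] _; rewrite /same_point /hev /=; ring.
Qed.

Lemma Fk_sigmas {C : numClosedFieldType} (k : C) :
  k != 0 -> sigmas (Fk k) (param k).1 (param k).2.
Proof.
move=> k0.
have fin : forall v1 v2 v3 kap, kap != 0 -> v1 <> (0, 0) -> v2 <> (0, 0) -> v3 <> (0, 0) ->
    fpid (Fk k) v1 v2 v3 kap -> sigmas (Fk k) (param k).1 (param k).2.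
  move=> v1 v2 v3 kap kap0 n1 n2 n3 H.
  exists v1, v2, v3; split; first by split => //; exists kap.
  have one0 : (1 : C) != 0 by rewrite oner_eq0.
  have [E1 E2] := form1_sig _ _ _ _ _ _ _ k0 k0 one0 kap0 n1 n2 n3 H.
  by rewrite /= /Fk E1 E2 divr1.
have n10 : ((1 : C), (0 : C)) <> (0, 0) by apply/pair_neq0; rewrite oner_eq0.
have [k1|k1] := eqVneq k 1.
  subst k; apply: (fin (1, 0) (1, 0) (1, 0) (-1)) => //.
    by rewrite oppr_eq0 oner_eq0.
  by move=> x y; rewrite /fixpoly /Lf /=; ring.
have k1' : 1 - k != 0 by rewrite subr_eq0 eq_sym.
set r := sqrtC (k / (1 - k)).
have hr : r ^+ 2 * (1 - k) = k by rewrite /r sqrtCK; field.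
have nr : forall s : C, (s, (1 : C)) <> (0, 0) by move=> s; apply/pair_neq0; rewrite oner_eq0 orbT.
apply: (fin (1, 0) (r, 1) (- r, 1) (1 - k)) => // x y.
rewrite /fixpoly /Lf /=.
apply: subr0_eq.
transitivity (y ^+ 3 * (k - r ^+ 2 * (1 - k))); first by ring.
by rewrite hr subrr mulr0.
Qed.

Lemma backward {C : numClosedFieldType} (k : C) : k != 0 -> symmetry_locus (param k).
Proof.
move=> k0; exists (Fk k); split; first exact: Fk_rat2.
split; first exact: Fk_aut.
exact: Fk_sigmas.
Qed.

Lemma invsq_rat2 {C : numClosedFieldType} : is_rat2 (inv_sq_map C).
Proof.
move=> [x y] /pair_neq0 v0 [] /= E1 E2.
have ey : y ^+ 2 = 0 by rewrite -E1; ring.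
have ex : x ^+ 2 = 0 by rewrite -E2; ring.
move/eqP: ey; rewrite expf_eq0 /= => /eqP y0.
move/eqP: ex; rewrite expf_eq0 /= => /eqP x0.
by move: v0; rewrite x0 y0 eqxx.
Qed.

Lemma invsq_aut {C : numClosedFieldType} : has_nontriv_aut (inv_sq_map C).
Proof.
exists swapm; split; first by apply/eqP; exact: swap_det.
split; first by move=> [E _]; move: (@oner_eq0 C); rewrite E eqxx.
by move=> [x y] _; rewrite /same_point /hev /swapm /=; ring.
Qed.

Lemma invsq_sigmas_val {C : numClosedFieldType} : sigmas (inv_sq_map C) (-6) 12.
Proof.
have [w hw] := quad_root (1 : C) 1.
have nr : forall s : C, (s, (1 : C)) <> (0, 0) by move=> s; apply/pair_neq0; rewrite oner_eq0 orbT.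
have one0 : (1 : C) != 0 by rewrite oner_eq0.
have m10 : (-1 : C) != 0 by rewrite oppr_eq0.
have H : fpid (inv_sq_map C) (1, 1) (w, 1) (w ^+ 2, 1) (-1).
  move=> x y; rewrite /fixpoly /Lf /=.
  apply: subr0_eq.
  transitivity ((w ^+ 2 + 1 * w + 1) * (w * x * y ^+ 2 - x ^+ 2 * y + (1 - w) * y ^+ 3)).
    by ring.
  by rewrite hw mul0r.
exists (1, 1), (w, 1), (w ^+ 2, 1); split; first by split => //; exists (-1).
have [E1 E2] := invsq_sig _ _ _ _ _ _ one0 one0 m10 H.
by rewrite /= E1 E2.
Qed.

Definition pf {C : numClosedFieldType} (x y : C) : C :=
  2 * x ^+ 3 + x ^+ 2 * y - x ^+ 2 - 8 * x * y - 4 * y ^+ 2 + 12 * x + 12 * y - 36.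

Definition Pc {C : numClosedFieldType} : {mpoly C[2]} :=
  (2 : C)%:MP * 'X_i1 * 'X_i1 * 'X_i1 + 'X_i1 * 'X_i1 * 'X_i2 - 'X_i1 * 'X_i1
  - (8 : C)%:MP * 'X_i1 * 'X_i2 - (4 : C)%:MP * 'X_i2 * 'X_i2
  + (12 : C)%:MP * 'X_i1 + (12 : C)%:MP * 'X_i2 - (36 : C)%:MP.

Lemma pt2_1 {C : numClosedFieldType} (s : C * C) : pt2 s i1 = s.1. Proof. by []. Qed.
Lemma pt2_2 {C : numClosedFieldType} (s : C * C) : pt2 s i2 = s.2. Proof. by []. Qed.

Lemma Pc_eval {C : numClosedFieldType} (s : C * C) : (@Pc C).@[pt2 s] = pf s.1 s.2.
Proof.
rewrite /Pc !(mevalD, mevalB, mevalN, mevalM, mevalC, mevalXU) pt2_1 pt2_2 /pf. ring.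
Qed.

Lemma dXU {C : numClosedFieldType} (i j : 'I_2) :
  ('X_i : {mpoly C[2]})^`M(j) = (i == j)%:R%:MP.
Proof.
rewrite mderivX mnm1E.
case: (eqVneq i j) => [->|ne] /=.
  have -> : (U_(j) - U_(j))%MM = 0%MM :> 'X_{1..2}.
    by apply/mnmP => l; rewrite mnmBE mnm0E subnn.
  by rewrite mpolyX0 scale1r.
by rewrite scale0r.
Qed.

Lemma i1i2 : (i1 == i2) = false. Proof. by []. Qed.
Lemma i2i1 : (i2 == i1) = false. Proof. by []. Qed.

Definition pf1 {C : numClosedFieldType} (x y : C) : C :=
  6 * x ^+ 2 + 2 * x * y - 2 * x - 8 * y + 12.
Definition pf2 {C : numClosedFieldType} (x y : C) : C :=
  x ^+ 2 - 8 * x - 8 * y + 12.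

Ltac dsimp := rewrite !(mderivD, mderivB, mderivN, mderivM, mderivC, dXU, eqxx, i1i2, i2i1)
  !(mevalD, mevalB, mevalN, mevalM, mevalC, mevalXU) pt2_1 pt2_2 /=.

Lemma Pc_d1 {C : numClosedFieldType} (s : C * C) : ((@Pc C)^`M(i1)).@[pt2 s] = pf1 s.1 s.2.
Proof. rewrite /Pc; dsimp; rewrite /pf1; ring. Qed.

Lemma Pc_d2 {C : numClosedFieldType} (s : C * C) : ((@Pc C)^`M(i2)).@[pt2 s] = pf2 s.1 s.2.
Proof. rewrite /Pc; dsimp; rewrite /pf2; ring. Qed.

Lemma Pc_d11 {C : numClosedFieldType} (s : C * C) :
  ((@Pc C)^`M(i1)^`M(i1)).@[pt2 s] = 12 * s.1 + 2 * s.2 - 2.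
Proof. rewrite /Pc; dsimp; ring. Qed.

Lemma Pc_d12 {C : numClosedFieldType} (s : C * C) :
  ((@Pc C)^`M(i1)^`M(i2)).@[pt2 s] = 2 * s.1 - 8.
Proof. rewrite /Pc; dsimp; ring. Qed.

Lemma Pc_d22 {C : numClosedFieldType} (s : C * C) :
  ((@Pc C)^`M(i2)^`M(i2)).@[pt2 s] = -8.
Proof. rewrite /Pc; dsimp; ring. Qed.

Definition u1 : 'X_{1..2} := U_(i1)%MM.
Definition u2 : 'X_{1..2} := U_(i2)%MM.

Lemma Pc_mono {C : numClosedFieldType} :
  (@Pc C) = 2 *: 'X_[(u1 + u1 + u1)%MM] + 'X_[(u1 + u1 + u2)%MM] - 'X_[(u1 + u1)%MM]
    - 8 *: 'X_[(u1 + u2)%MM] - 4 *: 'X_[(u2 + u2)%MM] + 12 *: 'X_[u1] + 12 *: 'X_[u2] - (36 : C)%:MP.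
Proof. rewrite !mpolyXD -!mul_mpolyC /Pc /u1 /u2; ring. Qed.

Lemma Pc_coef {C : numClosedFieldType} m :
  (@Pc C)@_m = 2 * ((u1 + u1 + u1)%MM == m)%:R + ((u1 + u1 + u2)%MM == m)%:R - ((u1 + u1)%MM == m)%:R
    - 8 * ((u1 + u2)%MM == m)%:R - 4 * ((u2 + u2)%MM == m)%:R + 12 * (u1 == m)%:R + 12 * (u2 == m)%:R
    - 36 * (m == 0%MM)%:R.
Proof. by rewrite Pc_mono !(mcoeffD, mcoeffB, mcoeffN, mcoeffZ, mcoeffX, mcoeffC). Qed.

Lemma mdeg_u1 : mdeg u1 = 1%N. Proof. exact: mdeg1. Qed.
Lemma mdeg_u2 : mdeg u2 = 1%N. Proof. exact: mdeg1. Qed.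

Lemma deg_ne (m1 m : 'X_{1..2}) : (mdeg m1 < mdeg m)%N -> (m1 == m) = false.
Proof. by move=> H; apply/negbTE/eqP => E; move: H; rewrite E ltnn. Qed.

Lemma natmul_cancel {C : numClosedFieldType} {n : nat} {x : C} :
  n%:R * x = 0 -> (n != 0)%N -> x = 0.
Proof. by move=> /eqP + n0; rewrite mulf_eq0 pnatr_eq0 (negbTE n0) /= => /eqP. Qed.

Lemma msize_Pc {C : numClosedFieldType} : msize (@Pc C) = 4%N.
Proof.
apply/eqP; rewrite eqn_leq; apply/andP; split.
  rewrite msizeE; apply/bigmax_leqP_seq => m Hm _.
  rewrite ltnNge; apply/negP => hm.
  move: Hm; rewrite mcoeff_msupp Pc_coef.
  have -> : (m == 0%MM) = false by rewrite eq_sym deg_ne ?mdeg0 // (@leq_trans 4).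
  rewrite !deg_ne; try by rewrite ?(mdegD, mdeg_u1, mdeg_u2); apply: (leq_trans _ hm).
  by move/eqP; apply; rewrite /=; ring.
have H3 : (u1 + u1 + u1)%MM \in msupp (@Pc C).
  rewrite mcoeff_msupp Pc_coef eqxx.
  have -> : (u1 + u1 + u2 == u1 + u1 + u1)%MM = false.
    apply/negbTE/eqP => E; have := congr1 (fun m : 'X_{1..2} => m i2) E.
    by rewrite !mnmDE /u1 /u2 !mnm1E.
  have -> : (u1 + u1 + u1 == 0)%MM = false by rewrite eq_sym deg_ne ?(mdegD, mdeg_u1, mdeg0).
  rewrite !deg_ne; try by rewrite ?(mdegD, mdeg_u1, mdeg_u2).
  by rewrite !mulr0 !subr0 !addr0 mulr1 pnatr_eq0.
by have := msize_mdeg_lt H3; rewrite !mdegD mdeg_u1.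
Qed.

Lemma line_contra {C : numClosedFieldType} (m d : C) :
  (forall t, pf t (m * t + d) = 0) -> False.
Proof.
move=> H.
have h6 : 6%:R * (2 + m) = 0.
  transitivity (pf 3 (m * 3 + d) - 3 * pf 2 (m * 2 + d) + 3 * pf 1 (m * 1 + d) - pf 0 (m * 0 + d)).
    by rewrite /pf; ring.
  by rewrite !H; ring.
have h2m := natmul_cancel h6 isT.
have hm : m = -2 by apply: subr0_eq; rewrite -[RHS]h2m; ring.
subst m.
have h2 : 2%:R * (d - 1) = 0.
  transitivity (pf 2 (-2 * 2 + d) - 2 * pf 1 (-2 * 1 + d) + pf 0 (-2 * 0 + d)).
    by rewrite /pf; ring.
  by rewrite !H; ring.
have hd : d = 1 by apply: subr0_eq; exact: (natmul_cancel h2 isT).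
subst d.
have h28 : 28%:R * (1 : C) = 0.
  transitivity (- pf (0 : C) (-2 * 0 + 1)); first by rewrite /pf; ring.
  by rewrite H oppr0.
by move: (natmul_cancel h28 isT) => /eqP; rewrite oner_eq0.
Qed.

Lemma vert_contra {C : numClosedFieldType} (c : C) : (forall t, pf c t = 0) -> False.
Proof.
move=> H.
have h8 : 8%:R * (1 : C) = 0.
  transitivity (- (pf c 2 - 2 * pf c 1 + pf c 0)); first by rewrite /pf; ring.
  by rewrite !H; ring.
by move: (natmul_cancel h8 isT) => /eqP; rewrite oner_eq0.
Qed.

Lemma deg1_struct {C : numClosedFieldType} (a : {mpoly C[2]}) :
  (msize a <= 2)%N -> a = (a@_0%MM)%:MP + a@_u1 *: 'X_i1 + a@_u2 *: 'X_i2.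
Proof.
move=> sa; apply/mpolyP => m.
rewrite !(mcoeffD, mcoeffZ, mcoeffC, mcoeffX).
case: (ltnP 1 (mdeg m)) => hm.
  rewrite memN_msupp_eq0; last by apply: msize_mdeg_ge; exact: (leq_trans sa hm).
  have -> : (m == 0%MM) = false by rewrite eq_sym deg_ne ?mdeg0 // (@leq_trans 2).
  rewrite -/u1 -/u2 !deg_ne ?mdeg_u1 ?mdeg_u2 //.
  by rewrite !mulr0 !addr0.
have [m0|m0] := eqVneq (mdeg m) 0%N.
  move/eqP: m0; rewrite mdeg_eq0 => /eqP ->.
  by rewrite eqxx /u1 /u2 !mnm1_eq0 !mulr0 !addr0 mulr1.
have /mdeg1P [i /eqP ->] : mdeg m == 1%N.
  by rewrite eqn_leq hm lt0n m0.
rewrite mnm1_eq0 mulr0 add0r /u1 /u2 !eq_mnm1.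
case: i => [[|[|]] //= Hi].
  have -> : Ordinal Hi = i1 by apply: val_inj.
  by rewrite mulr1 mulr0 addr0.
have -> : Ordinal Hi = i2 by apply: val_inj.
by rewrite mulr1 mulr0 add0r.
Qed.

Lemma Pc_zero_pf {C : numClosedFieldType} (s : C * C) :
  (@Pc C).@[pt2 s] = 0 <-> pf s.1 s.2 = 0.
Proof. by rewrite Pc_eval. Qed.

Lemma key_irr {C : numClosedFieldType} (p q : {mpoly C[2]}) :
  (@Pc C) = p * q -> (msize p <= 2)%N -> (1 < msize p)%N -> False.
Proof.
move=> E sp1 sp2.
have Hs := deg1_struct _ sp1.
set p0 := p@_0%MM in Hs; set p1 := p@_u1 in Hs; set p2 := p@_u2 in Hs.
have ev : forall s : C * C, p.@[pt2 s] = p0 + p1 * s.1 + p2 * s.2.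
  by move=> s; rewrite Hs !(mevalD, mevalZ, mevalC, mevalXU).
have Z : forall s : C * C, p.@[pt2 s] = 0 -> pf s.1 s.2 = 0.
  by move=> s hs; rewrite -Pc_eval E mevalM hs mul0r.
have [p20|p20] := eqVneq p2 0.
  have [p10|p10] := eqVneq p1 0.
    move: sp2; rewrite Hs p10 p20 !scale0r !addr0 msizeC.
    by case: (p0 != 0).
  apply: (vert_contra (- p0 / p1)) => t.
  by apply: (Z (- p0 / p1, t)); rewrite ev /= p20; field.
apply: (line_contra (- p1 / p2) (- p0 / p2)) => t.
by apply: (Z (t, - p1 / p2 * t + - p0 / p2)); rewrite ev /=; field.
Qed.

Lemma Pc_irr {C : numClosedFieldType} : mirreducible (@Pc C).
Proof.
split; first by rewrite /mconst msize_Pc.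
move=> a b E.
have P0 : (@Pc C) != 0 by apply/eqP => P0; move: (@msize_Pc C); rewrite P0 msize0.
have a0 : a != 0 by apply: contraNneq P0 => a0; rewrite E a0 mul0r.
have b0 : b != 0 by apply: contraNneq P0 => b0; rewrite E b0 mulr0.
have := msizeM a0 b0; rewrite -E msize_Pc => hs.
rewrite /mconst; apply/orP.
case: (leqP (msize a) 1) => ha; first by left.
case: (leqP (msize b) 1) => hb; first by right.
exfalso.
case: (leqP (msize a) 2) => ha2.
  exact: (key_irr a b E ha2 ha).
have hb2 : (msize b <= 2)%N.
  by move: hs ha2; set x := msize a; set y := msize b; lia.
apply: (key_irr b a) => //.
by rewrite mulrC.
Qed.

Lemma four_neq0 (C : numClosedFieldType) : (4 : C) != 0.
Proof. by rewrite pnatr_eq0. Qed.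

Lemma zero_iff {C : numClosedFieldType} (s : C * C) :
  pf s.1 s.2 = 0 <-> exists2 k : C, k != 0 & s = param k.
Proof.
case: s => s1 s2 /=; split; last first.
  by case=> k k0 [-> ->]; rewrite /pf; field.
move=> H.
have [k hk] := quad_root (- (s1 + 2) / 4) (1 / 4).
have k0 : k != 0.
  apply/eqP => k0.
  have : (1 / 4 : C) = 0 by rewrite -[RHS]hk k0; ring.
  by move/eqP; rewrite mul1r invr_eq0 pnatr_eq0.
have e1 : s1 = 4 * k - 2 + k^-1.
  apply: subr0_eq.
  transitivity (- (4 / k) * (k ^+ 2 + (- (s1 + 2) / 4) * k + 1 / 4)).
    by field; fside.
  by rewrite hk mulr0.
subst s1.
have k4 : (4 * k)^-1 != 0 by rewrite invr_eq0 mulf_neq0 // four_neq0.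
have F : -4 * ((s2 - (param k).2) * (s2 - (param (4 * k)^-1).2)) = 0.
  by rewrite -[RHS]H /pf /param /=; field; fside.
have m4 : (-4 : C) != 0 by rewrite oppr_eq0 four_neq0.
rewrite mulrC in F.
move/(mulf0_l m4)/mul0_or: F => [h|h].
  by exists k => //; rewrite /param; congr (_, _); apply: subr0_eq.
exists (4 * k)^-1 => //; rewrite /param; congr (_, _).
  by field; fside.
exact: subr0_eq.
Qed.

Lemma sing_iff {C : numClosedFieldType} (s : C * C) :
  msingular (@Pc C) s <-> s = (-6, 12).
Proof.
rewrite /msingular Pc_eval Pc_d1 Pc_d2.
split; last by move=> ->; rewrite /pf /pf1 /pf2 /=; split; ring.
case: s => s1 s2 [/= h0 h1 h2].
have E : (2 * s1) * (s1 + 6) ^+ 2 = 0.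
  transitivity (8 * pf1 s1 s2 + (2 * s1 - 8) * pf2 s1 s2); first by rewrite /pf1 /pf2; ring.
  by rewrite h1 h2; ring.
case/mul0_or: E => [E|E].
  have s10 : s1 = 0 by apply: (mulf0_l (_ : (2 : C) != 0)); [exact: two_neq0 | rewrite mulrC].
  subst s1.
  have h8 : 8 * s2 = 12 by apply: subr0_eq; rewrite -[RHS]oppr0 -h2 /pf2; ring.
  have : 432%:R * (1 : C) = 0.
    transitivity ((8 * s2) ^+ 2 - 24 * (8 * s2) + 576); first by rewrite h8; ring.
    transitivity (- 16 * pf 0 s2); first by rewrite /pf; ring.
    by rewrite h0 mulr0.
  by move/natmul_cancel => /(_ isT) /eqP; rewrite oner_eq0.
have s16 : s1 = -6.
  by apply: subr0_eq; move/eqP: E; rewrite expf_eq0 /= => /eqP <-; ring.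
subst s1.
have h8 : 8%:R * (s2 - 12) = 0 by rewrite -[RHS]oppr0 -h2 /pf2; ring.
by rewrite (subr0_eq (natmul_cancel h8 isT)).
Qed.

Lemma cusp_Pc {C : numClosedFieldType} : mcusp (@Pc C) (-6, 12).
Proof.
rewrite /mcusp Pc_d11 Pc_d12 Pc_d22 /=.
split; first by apply/sing_iff.
  case=> _ _ /eqP; rewrite oppr_eq0 pnatr_eq0 //.
ring.
Qed.

Lemma param_inj {C : numClosedFieldType} (k k' : C) :
  k != 0 -> k' != 0 -> param k = param k' -> k = k'.
Proof.
move=> k0 k0' [E1 E2].
have : (k - k') * (4 * k * k' - 1) = 0.
  transitivity (k * k' * ((4 * k - 2 + k^-1) - (4 * k' - 2 + k'^-1))); first by field; fside.
  by rewrite E1 subrr mulr0.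
case/mul0_or => [h|h]; first exact: subr0_eq.
have hk' : k' = (4 * k)^-1.
  apply: subr0_eq.
  transitivity ((4 * k * k' - 1) / (4 * k)); first by field; fside.
  by rewrite h mul0r.
subst k'.
have : (4 * k ^+ 2 - 1) * (2 * k + 1) ^+ 2 = 0.
  transitivity (4 * k ^+ 2 * ((4 * k ^+ 2 - 4 * k + 5 - 2 / k) -
     (4 * ((4 * k)^-1) ^+ 2 - 4 * (4 * k)^-1 + 5 - 2 / ((4 * k)^-1)))).
    by field; fside.
  by rewrite E2 subrr mulr0.
have fin : 4 * k ^+ 2 - 1 = 0 -> k = (4 * k)^-1.
  move=> h4; apply: subr0_eq.
  transitivity ((4 * k ^+ 2 - 1) / (4 * k)); first by field; fside.
  by rewrite h4 mul0r.
case/mul0_or => [h4|h4]; first exact: fin.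
apply: fin; move/eqP: h4; rewrite expf_eq0 /= => /eqP h4.
transitivity ((2 * k - 1) * (2 * k + 1)); first by ring.
by rewrite h4 mulr0.
Qed.

Theorem corollary5p3 (C : numClosedFieldType) :
  (* parametric description of S *)
  (forall s : C * C,
     symmetry_locus s <-> exists2 k : C, k != 0 & s = param k) /\
  (* the parametrisation is injective, hence birational: S has genus zero *)
  (forall k k' : C, k != 0 -> k' != 0 -> param k = param k' -> k = k') /\
  (* S is an irreducible plane curve of degree three, non-singular except
     for a cusp at (-6, 12) *)
  (exists P : {mpoly C[2]},
     [/\ msize P = 4%N, mirreducible P,
         (forall s : C * C, symmetry_locus s <-> P.@[pt2 s] = 0),
         (forall s : C * C, msingular P s <-> s = (-6, 12)) &
         mcusp P (-6, 12)]) /\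
  (* the cusp is the class of z |-> 1/z^2, and corresponds to k = -1/2 *)
  is_rat2 (inv_sq_map C) /\ sigmas (inv_sq_map C) (-6) 12 /\
  has_nontriv_aut (inv_sq_map C) /\
  param (- 2^-1 : C) = (-6, 12).
Proof.
have loc : forall s : C * C, symmetry_locus s <-> exists2 k : C, k != 0 & s = param k.
  move=> s; split.
    case=> F [HF [Ha Hs]].
    have [k k0 E] := forward _ _ _ HF Ha Hs.
    by exists k => //; rewrite -E -surjective_pairing.
  by case=> k k0 ->; exact: backward.
split; first exact: loc.
split; first exact: param_inj.
split.
  exists Pc; split.
  - exact: msize_Pc.
  - exact: Pc_irr.
  - by move=> s; rewrite loc Pc_eval zero_iff.
  - exact: sing_iff.
  - exact: cusp_Pc.
split; first exact: invsq_rat2.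
split; first exact: invsq_sigmas_val.
split; first exact: invsq_aut.
by rewrite /param; congr (_, _); field; fside.
Qed.
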